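(* Let $F\colon \mathsf{Set}\to\mathsf{Set}$ be a functor preserving intersections, and let $I$ be a set. Then an $I$-pointed $F$-coalgebra $(C,c,i_C)$ is reachable if and only if its canonical graph $(C,\tau_C\cdot c,i_C)$, regarded as an $I$-pointed $\mathcal{P}$-coalgebra, is reachable.
   Context: $\mathcal P$ denotes the power-set functor on $\mathsf{Set}$. On $\mathsf{Set}$ we use the factorization system (surjective maps, injective maps); subobjects and subcoalgebras are taken w.r.t. injective maps. An $I$-pointed $F$-coalgebra is a triple $(C,c,i_C)$ with $c\colon C\to FC$ and $i_C\colon I\to C$; a homomorphism $h\colon (C,c,i_C)\to(D,d,i_D)$ is a map $h\colon C\to D$ with $d\cdot h=Fh\cdot c$ and $h\cdot i_C=i_D$. A subcoalgebra is such a homomorphism that is injective. An $I$-pointed coalgebra is reachable if every subcoalgebra of it (every injective homomorphism of $I$-pointed coalgebras into it) is an isomorphism. $F$ preserves intersections means $F$ preserves injective maps and wide pullbacks (intersections) of families of injective maps with common codomain. For each set $X$, $\tau_X\colon FX\to\mathcal P X$ is defined by $\tau_X(t)=\{x\in X\mid t \text{ is not in the image of } F i\colon F(X\setminus\{x\})\to FX\}$, where $i\colon X\setminus\{x\}\hookrightarrow X$ is the inclusion. The canonical graph of $(C,c)$ is the $\mathcal P$-coalgebra $\tau_C\cdot c\colon C\to \mathcal P C$, pointed by the same $i_C$. *)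

(* Defs.v *)
Set Implicit Arguments.

Record SetFunctor := {
  Fobj :> Type -> Type;
  fmap : forall X Y : Type, (X -> Y) -> Fobj X -> Fobj Y;
  fmap_id : forall X (t : Fobj X), fmap (fun x : X => x) t = t;
  fmap_comp : forall X Y Z (f : X -> Y) (g : Y -> Z) (t : Fobj X),
      fmap (fun x => g (f x)) t = fmap g (fmap f t)
}.

Definition injective {A B : Type} (f : A -> B) := forall x y, f x = f y -> x = y.

Definition is_wide_pullback {J X P : Type} {A : J -> Type}
    (m : forall j, A j -> X) (p : forall j, P -> A j) (q : P -> X) : Prop :=
  (forall j x, m j (p j x) = q x) /\
  forall (Q : Type) (r : forall j, Q -> A j) (s : Q -> X),
    (forall j y, m j (r j y) = s y) ->
    exists u : Q -> P,
      ((forall j y, p j (u y) = r j y) /\ (forall y, q (u y) = s y)) /\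
      forall u' : Q -> P,
        ((forall j y, p j (u' y) = r j y) /\ (forall y, q (u' y) = s y)) ->
        forall y, u' y = u y.

Definition preserves_intersections (F : SetFunctor) : Prop :=
  (forall X Y (m : X -> Y), injective m -> injective (fmap F m)) /\
  (forall (J X P : Type) (A : J -> Type) (m : forall j, A j -> X)
          (p : forall j, P -> A j) (q : P -> X),
     (forall j, injective (m j)) ->
     is_wide_pullback m p q ->
     is_wide_pullback (fun j => fmap F (m j)) (fun j => fmap F (p j)) (fmap F q)).

Definition Pow (X : Type) : Type := X -> Prop.
Definition Pmap (X Y : Type) (f : X -> Y) (S : Pow X) : Pow Y :=
  fun y => exists x, S x /\ f x = y.

Definition pt_hom {G : Type -> Type} (gmap : forall X Y : Type, (X -> Y) -> G X -> G Y)
    {I C D : Type} (c : C -> G C) (iC : I -> C) (d : D -> G D) (iD : I -> D)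
    (h : C -> D) : Prop :=
  (forall x, d (h x) = gmap C D h (c x)) /\ (forall i, h (iC i) = iD i).

Definition reachable {G : Type -> Type} (gmap : forall X Y : Type, (X -> Y) -> G X -> G Y)
    {I C : Type} (c : C -> G C) (iC : I -> C) : Prop :=
  forall (D : Type) (d : D -> G D) (iD : I -> D) (h : D -> C),
    injective h -> pt_hom gmap d iD c iC h ->
    exists g : C -> D, pt_hom gmap c iC d iD g /\
      (forall x, g (h x) = x) /\ (forall y, h (g y) = y).

Definition tau (F : SetFunctor) (X : Type) (t : F X) : Pow X :=
  fun x => ~ exists s : F {y : X | y <> x}, fmap F (@proj1_sig X _) s = t.

(* Main.v *)
Require Import Defs.
From Stdlib Require Import Classical ClassicalEpsilon FunctionalExtensionality PropExtensionality ProofIrrelevance.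

Lemma sig_ext {A : Type} {P : A -> Prop} (a b : sig P) :
  proj1_sig a = proj1_sig b -> a = b.
Proof.
  destruct a as [a pa], b as [b pb]; simpl; intros ->.
  f_equal; apply proof_irrelevance.
Qed.

Lemma sig_inj {A : Type} {P : A -> Prop} : injective (@proj1_sig A P).
Proof. intros a b; apply sig_ext. Qed.

Section Generic.
Variable G : Type -> Type.
Variable gmap : forall X Y : Type, (X -> Y) -> G X -> G Y.
Hypothesis gid : forall X (t : G X), gmap _ _ (fun x : X => x) t = t.
Hypothesis gcomp : forall X Y Z (f : X -> Y) (g : Y -> Z) (t : G X),
      gmap _ _ (fun x => g (f x)) t = gmap _ _ g (gmap _ _ f t).

Definition closedS {I C : Type} (c : C -> G C) (iC : I -> C) (S : C -> Prop) :=
  (forall i, S (iC i)) /\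
  (forall x, S x -> exists s : G (sig S), gmap _ _ (@proj1_sig C S) s = c x).

Lemma reach_iff {I C : Type} (c : C -> G C) (iC : I -> C) :
  reachable gmap c iC <-> (forall S, closedS c iC S -> forall x, S x).
Proof.
  split.
  - intros HR S [H1 H2] x.
    pose (d := fun y : sig S =>
      proj1_sig (constructive_indefinite_description _ (H2 (proj1_sig y) (proj2_sig y)))).
    pose (iD := fun i => exist S (iC i) (H1 i)).
    destruct (HR (sig S) d iD (@proj1_sig C S)) as [g [_ [_ Hg]]].
    + apply sig_inj.
    + split.
      * intros y. unfold d.
        destruct (constructive_indefinite_description _ _) as [s Hs]; simpl; auto.
      * intros i; reflexivity.
    + rewrite <- (Hg x). apply proj2_sig.
  - intros HS D d iD h Hinj [Hh1 Hh2].
    assert (Hall : forall x, exists y, h y = x).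
    { apply HS. split.
      - intros i. exists (iD i). auto.
      - intros x [y Hy].
        exists (gmap _ _ (fun z => exist (fun x => exists y, h y = x) (h z) (ex_intro _ z eq_refl)) (d y)).
        rewrite <- gcomp. simpl. rewrite <- Hy. auto. }
    pose (g := fun x => proj1_sig (constructive_indefinite_description _ (Hall x))).
    assert (Hhg : forall x, h (g x) = x).
    { intros x; unfold g; destruct (constructive_indefinite_description _ _); auto. }
    assert (Hgh : forall y, g (h y) = y) by (intros y; apply Hinj; auto).
    exists g. split; [split|split; auto].
    + intros x. rewrite <- (Hhg x) at 2. rewrite Hh1, <- gcomp.
      replace (fun x0 => g (h x0)) with (fun x0 : D => x0)
        by (apply functional_extensionality; intros; auto).
      now rewrite gid.
    + intros i. apply Hinj. rewrite Hhg, Hh2. auto.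
Qed.
End Generic.

Lemma Pmap_id : forall X (t : Pow X), Pmap (fun x : X => x) t = t.
Proof.
  intros X t. apply functional_extensionality; intros y.
  apply propositional_extensionality; unfold Pmap; split.
  - intros [x [H ->]]; auto.
  - intros H; exists y; auto.
Qed.

Lemma Pmap_comp : forall X Y Z (f : X -> Y) (g : Y -> Z) (t : Pow X),
      Pmap (fun x => g (f x)) t = Pmap g (Pmap f t).
Proof.
  intros. apply functional_extensionality; intros z.
  apply propositional_extensionality; unfold Pmap; split.
  - intros [x [H <-]]. exists (f x); split; auto. exists x; auto.
  - intros [y [[x [H <-]] <-]]. exists x; auto.
Qed.

Definition Jt (F : SetFunctor) (C : Type) (t : F C) : Type :=
  {R : C -> Prop & {s : F (sig R) | fmap F (@proj1_sig C R) s = t}}.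
Definition jR {F : SetFunctor} {C : Type} {t : F C} (j : Jt F C t) : C -> Prop := projT1 j.

Lemma key (F : SetFunctor) (HF : preserves_intersections F) (C : Type)
  (t : F C) (S : C -> Prop) :
  (exists s : F (sig S), fmap F (@proj1_sig C S) s = t) <-> (forall x, tau F t x -> S x).
Proof.
  split.
  - intros [s Hs] x Ht. apply NNPP; intros HnS. apply Ht.
    exists (fmap F (fun y : sig S => exist (fun z => z <> x) (proj1_sig y)
                     (fun e => HnS (eq_ind _ S (proj2_sig y) _ e))) s).
    rewrite <- fmap_comp. simpl. auto.
  - intros Hsub.
    destruct HF as [_ HW].
    pose (J := Jt F C t).
    set (A := fun j : J => sig (@jR F C t j)).
    set (m := fun (j : J) (a : A j) => proj1_sig a).
    set (P := {x : C | forall j : J, @jR F C t j x}).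
    set (p := fun (j : J) (x : P) => exist (@jR F C t j) (proj1_sig x) (proj2_sig x j) : A j).
    set (q := fun x : P => proj1_sig x).
    assert (Hwp : is_wide_pullback m p q).
    { split.
      - intros; reflexivity.
      - intros Q r s Hrs.
        assert (Hu : forall y (j : J), @jR F C t j (s y)).
        { intros y j. rewrite <- (Hrs j y). apply (proj2_sig (r j y)). }
        exists ((fun y => exist (fun x => forall j : J, @jR F C t j x) (s y) (Hu y)) : Q -> P). split; [split|].
        + intros j y. apply sig_ext. simpl. symmetry; apply Hrs.
        + intros y; reflexivity.
        + intros u' [Hu1 Hu2] y. apply sig_ext. simpl. apply Hu2. }
    assert (Hinjm : forall j, injective (m j)) by (intros j; apply sig_inj).
    destruct (HW J C P A m p q Hinjm Hwp) as [_ HU].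
    destruct (HU unit (fun j _ => proj1_sig (projT2 j)) (fun _ => t)) as [u [[_ Hu] _]].
    { intros j y. exact (proj2_sig (projT2 j)). }
    assert (HPS : forall x : P, S (proj1_sig x)).
    { intros [x Hx]. simpl. apply Hsub. intros [s Hs].
      exact (Hx (existT (fun R : C -> Prop => {s : F (sig R) | fmap F (@proj1_sig C R) s = t}) (fun y => y <> x) (exist _ s Hs)) eq_refl). }
    exists (fmap F (fun x : P => exist S (proj1_sig x) (HPS x)) (u tt)).
    rewrite <- fmap_comp. simpl. apply (Hu tt).
Qed.

Theorem theorem4p5 (F : SetFunctor) (HF : preserves_intersections F)
  (I C : Type) (c : C -> F C) (iC : I -> C) :
  reachable (fmap F) c iC <-> reachable Pmap (fun x => tau F (c x)) iC.
Proof.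
  rewrite (reach_iff F (fmap F) (fmap_id F) (fmap_comp F)).
  rewrite (reach_iff Pow Pmap Pmap_id Pmap_comp).
  assert (E : forall S, closedS F (fmap F) c iC S <-> closedS Pow Pmap (fun x => tau F (c x)) iC S).
  { intros S; unfold closedS; split; intros [H1 H2]; split; auto; intros x Hx.
    - pose proof (proj1 (key F HF C (c x) S) (H2 x Hx)) as H3. clear H2; rename H3 into H2.
      exists (fun y : sig S => tau F (c x) (proj1_sig y)).
      apply functional_extensionality; intros z; apply propositional_extensionality.
      unfold Pmap; split.
      + intros [y [Hy <-]]; auto.
      + intros Hz. exists (exist S z (H2 z Hz)); auto.
    - apply (key F HF). intros z Hz.
      destruct (H2 x Hx) as [s Hs]. rewrite <- Hs in Hz.
      destruct Hz as [y [_ <-]]. apply proj2_sig. }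
  split; intros H S HS; apply H, E, HS.
Qed.
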